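(* Suppose a node $v$ of degree at least $3$ is deleted from a network and the healing responds by adding new edges (not previously present) only between former neighbors of $v$ such that the added edges form a connected graph on the set of former neighbors of $v$. Then, however the healing edges are chosen, at least one node has degree after the deletion and healing at least $1$ larger than its degree before the deletion.
   Context: Networks are undirected graphs; deleting a node removes it and all its incident edges. *)

(* Defs.v *)
From mathcomp Require Import all_boot.
Set Implicit Arguments. Unset Strict Implicit. Unset Printing Implicit Defensive.

Definition simple_graph (T : finType) (e : rel T) : Prop :=
  symmetric e /\ irreflexive e.

Definition nbhd (T : finType) (e : rel T) (v : T) : {set T} := [set y | e v y].

Definition deg (T : finType) (e : rel T) (x : T) : nat := #|[set y | e x y]|.

Definition healing (T : finType) (e : rel T) (v : T) (h : rel T) : Prop :=
  [/\ symmetric h, irreflexive h,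
      (forall x y, h x y -> e v x && e v y),
      (forall x y, h x y -> ~~ e x y) &
      (forall x y, e v x -> e v y -> connect h x y)].

Definition deg_healed (T : finType) (e : rel T) (v : T) (h : rel T) (x : T) : nat :=
  #|[set y | (y != v) && (e x y || h x y)]|.

(* Main.v *)
Require Import Defs.
From mathcomp Require Import all_boot.
Lemma three (T : finType) (A : {set T}) : 2 < #|A| -> exists a b c, [/\ a \in A, b \in A, c \in A & [/\ a != b, a != c & b != c]].
Proof.
move=> H.
have /set0Pn [a aA] : A != set0 by rewrite -card_gt0 (ltn_trans _ H).
have H1 : 1 < #|A :\ a| by rewrite (cardsD1 a A) aA /= in H.
have /set0Pn [b] : A :\ a != set0 by rewrite -card_gt0 ltnW.
rewrite in_setD1 => /andP [ba bA].
have H2 : 0 < #|A :\ a :\ b| by rewrite (cardsD1 b (A :\ a)) in_setD1 ba bA /= in H1.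
have /set0Pn [c] : A :\ a :\ b != set0 by rewrite -card_gt0.
rewrite !in_setD1 => /and3P [cb ca cA].
by exists a, b, c; split => //; split => //; rewrite eq_sym.
Qed.

Lemma conn_match (T : finType) (h : rel T) :
  symmetric h -> (forall z w1 w2, h z w1 -> h z w2 -> w1 = w2) ->
  forall x y, connect h x y -> x = y \/ h x y.
Proof.
move=> hs uniq x y /connectP [p]; elim: p x => [|z p IH] x /=.
  by move=> _ ->; left.
move=> /andP [hxz pz] ly.
case: (IH z pz ly) => [<-|hzw]; first by right.
left; apply: (uniq z); first by rewrite hs.
done.
Qed.

Theorem lemma11 (T : finType) (e : rel T) (v : T) (h : rel T) :
  simple_graph e -> 3 <= deg e v -> healing e v h ->
  exists x : T, x != v /\ deg e x + 1 <= deg_healed e v h x.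
Proof.
move=> [es ei] d3 [hs hi hN hnew hc].
have [x [b [c [evx hxb hxc bc]]]] : exists x b c, [/\ e v x, h x b, h x c & b != c].
  case: (boolP [exists x, exists b, exists c, [&& e v x, h x b, h x c & b != c]]).
    by move=> /existsP [x /existsP [b /existsP [c /and4P [? ? ? ?]]]]; exists x, b, c.
  move=> /existsPn H.
  have uq : forall z w1 w2, h z w1 -> h z w2 -> w1 = w2.
    move=> z w1 w2 h1 h2; apply/eqP; apply: contraT => ne.
    have := H z; move/existsPn/(_ w1)/existsPn/(_ w2).
    by rewrite (andP (hN _ _ h1)).1 h1 h2 ne.
  have [a [b [c [aN bN cN [ab ac bc]]]]] := @three _ [set y | e v y] d3.
  rewrite !inE in aN bN cN.
  have [E|hab] := @conn_match _ _ hs uq _ _ (hc _ _ aN bN); first by rewrite E eqxx in ab.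
  have [E|hac] := @conn_match _ _ hs uq _ _ (hc _ _ aN cN); first by rewrite E eqxx in ac.
  by rewrite (uq _ _ _ hab hac) eqxx in bc.
have xv : x != v by apply: contraTneq evx => ->; rewrite ei.
exists x; split => //.
have [/andP [_ eb] /andP [_ ec]] := (hN _ _ hxb, hN _ _ hxc).
have bv : b != v by apply: contraTneq eb => ->; rewrite ei.
have cv : c != v by apply: contraTneq ec => ->; rewrite ei.
set S := [set y | e x y].
have vS : v \in S by rewrite inE es.
have bS : b \notin S by rewrite inE hnew.
have cS : c \notin S by rewrite inE hnew.
rewrite /deg_healed /deg -/S.
have sub : (S :\ v) :|: [set b; c] \subset [set y | (y != v) && (e x y || h x y)].
  apply/subsetP => y; rewrite !inE => /orP [/andP [-> ->] //|/orP [] /eqP E]; subst y.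
    by rewrite bv hxb orbT.
  by rewrite cv hxc orbT.
apply: leq_trans (subset_leq_card sub).
rewrite cardsU.
have -> : (S :\ v) :&: [set b; c] = set0.
  apply/setP => y; rewrite !inE.
  apply/negbTE/andP => [[/andP [_ exy] /orP [] /eqP E]]; subst y.
    by move: bS; rewrite inE exy.
  by move: cS; rewrite inE exy.
rewrite cards0 subn0 cards2 bc (cardsD1 v S) vS /=.
by rewrite add1n addn1 addn2.
Qed.
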